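(* Let $X=\{x_1,\dots,x_m\}$ be any $m$-point metric space, let $n\ge m$, and let $\mathbf{r}=(r_1,\dots,r_m)$ be positive integers with $\sum_i r_i=n$. Then there exist a finite metric space $Y$ with points $y_i^\alpha$ ($1\le i\le m$, $1\le\alpha\le r_i$) and the surjection $f\colon Y\to X$, $f(y_i^\alpha)=x_i$ (so $\#f^{-1}(x_i)=r_i$), such that $F_{X,\mathbf{r}}\big(d_Y(y_i^\alpha,y_j^\beta)\big)\neq0$.
   Context: Write $d_{ij}=d_X(x_i,x_j)$ and let $\delta_{ij}$ be the Kronecker delta. The polynomial $F_{X,\mathbf{r}}$ in variables $a=(a_{ij}^{\alpha\beta})$ ($i,j\in\{1,\dots,m\}$, $1\le\alpha\le r_i$, $1\le\beta\le r_j$) is defined as follows. For each choice $(\beta_1,\dots,\beta_m)$ with $1\le\beta_j\le r_j$, let $M^{(\beta_1,\dots,\beta_m)}(a)$ be the $n\times n$ matrix whose rows and columns are indexed by pairs $(i,\alpha)$, $1\le i\le m$, $1\le\alpha\le r_i$, in lexicographic order, with entry in row $(i,\alpha)$ and column $(j,\beta)$ equal to $\delta_{ij}$ if $\beta=\beta_j$, and equal to $e^{-d_{ij}}\,(a_{ij}^{\alpha\beta}-d_{ij})$ if $\beta\neq\beta_j$. Then $F_{X,\mathbf{r}}(a)=\sum_{\beta_1=1}^{r_1}\cdots\sum_{\beta_m=1}^{r_m}\det M^{(\beta_1,\dots,\beta_m)}(a)$. *)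

(* Defs.v *)
From HB Require Import structures.
From mathcomp Require Import all_boot all_order all_algebra.
From mathcomp Require Import reals.
From mathcomp Require Import sequences exp.
Set Implicit Arguments. Unset Strict Implicit. Unset Printing Implicit Defensive.
Import Order.TTheory GRing.Theory Num.Theory.
Local Open Scope ring_scope.

Definition is_metric (R : realType) (T : Type) (d : T -> T -> R) : Prop :=
  (forall x y, d x y = 0 <-> x = y) /\
  (forall x y, d x y = d y x) /\
  (forall x y z, d x z <= d x y + d y z).

(* Index set of the points y_i^alpha : pairs (i, alpha), 1 <= alpha <= r_i
   (0-based here). *)
Definition idx (m : nat) (r : 'I_m -> nat) : finType := {i : 'I_m & 'I_(r i)}.

(* The matrix M^{(beta_1..beta_m)}(a), with rows/columns indexed by
   the enumeration of idx m r (n = #|idx m r| = sum_i r_i). *)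
Definition Mbeta (R : realType) (m : nat) (r : 'I_m -> nat)
  (dX : 'I_m -> 'I_m -> R) (a : idx r -> idx r -> R)
  (b : {dffun forall i : 'I_m, 'I_(r i)}) : 'M[R]_(#|{: idx r}|) :=
  \matrix_(k, l)
    (let p := enum_val k in let q := enum_val l in
     let i := tag p in let j := tag q in
     if tagged q == b j then (i == j)%:R
     else expR (- dX i j) * (a p q - dX i j)).

Definition F_Xr (R : realType) (m : nat) (r : 'I_m -> nat)
  (dX : 'I_m -> 'I_m -> R) (a : idx r -> idx r -> R) : R :=
  \sum_(b : {dffun forall i : 'I_m, 'I_(r i)}) \det (Mbeta dX a b).

(* Main.v *)
Require Import Defs.
Set Warnings "-all".
From HB Require Import structures.
From mathcomp Require Import all_boot all_order all_algebra.
From mathcomp Require Import fingroup perm.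
From mathcomp Require Import reals.
From mathcomp Require Import sequences exp.
Set Warnings "-all".
Import Order.TTheory GRing.Theory Num.Theory.
Local Open Scope ring_scope.

Lemma det_pat (R : comRingType) (n : nat) (M : 'M[R]_n) (S : pred 'I_n) :
  (forall i j, i != j -> (S i || ~~ S j) -> M i j = 0) ->
  \det M = \prod_i M i i.
Proof.
move=> H; rewrite /determinant (bigD1 (1%g : 'S_n)) //=.
rewrite [X in _ + X]big1 ?addr0.
  by rewrite odd_perm1 expr0 mul1r; apply: eq_bigr => i _; rewrite perm1.
move=> s Hs.
have [i Hi] : exists i, s i != i.
  apply/existsP; rewrite -negb_forall; apply: contra Hs => /forallP Hf.
  by apply/eqP/permP => x; rewrite perm1; apply/eqP.
case HS: (S i || ~~ S (s i)).
  by rewrite (bigD1 i) //= H ?mul0r ?mulr0 // eq_sym.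
have := negbT HS; rewrite negb_or negbK => /andP [Si Ssi].
have Hj : s (s i) != s i by rewrite (inj_eq perm_inj).
by rewrite (bigD1 (s i)) //= H ?Ssi ?mul0r ?mulr0 // eq_sym.
Qed.

Definition spec {m : nat} {r : 'I_m -> nat} (b : {dffun forall i : 'I_m, 'I_(r i)})
  (k : 'I_#|{: idx r}|) : bool := tagged (enum_val k) == b (tag (enum_val k)).
Definition sp0 {m : nat} {r : 'I_m -> nat} (b : {dffun forall i : 'I_m, 'I_(r i)})
  (j : 'I_m) : 'I_#|{: idx r}| := enum_rank (Tagged (fun i => 'I_(r i)) (b j)).

Lemma spec_uniq {m r b k j} : @spec m r b k -> tag (enum_val k) = j -> k = sp0 b j.
Proof.
move=> Hs Ht; apply: enum_val_inj; rewrite /sp0 enum_rankK; move: Hs Ht.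
by rewrite /spec; case: (enum_val k) => i a /= /eqP -> <-.
Qed.

Lemma sp0_spec {m r} b j : @spec m r b (@sp0 m r b j) /\ tag (enum_val (sp0 b j)) = j.
Proof. by rewrite /spec /sp0 enum_rankK /=. Qed.

Lemma prod_val (R : comRingType) m r b (t : R) :
  \prod_k (if @spec m r b k then 1 else -t) = \prod_i (-t) ^+ (r i).-1.
Proof.
rewrite /spec.
rewrite -(big_enum_val (fun p : idx r => if tagged p == b (tag p) then 1 else -t)).
transitivity (\prod_i \prod_(j : 'I_(r i)) if j == b i then 1 else -t); last first.
  apply: eq_bigr => i _; rewrite (bigD1 (b i)) //= eqxx mul1r.
  rewrite (eq_bigr (fun _ => -t)); last by move=> j /negbTE ->.
  by rewrite prodr_const cardC1 card_ord.
rewrite (sig_big_dep xpredT (fun i (_ : 'I_(r i)) => true)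
    (fun i j => if j == b i then 1 else -t)).
by apply: eq_bigl.
Qed.

Definition Cm {R : ringType} {m : nat} {r : 'I_m -> nat} (b : {dffun forall i : 'I_m, 'I_(r i)}) (t : R)
  : 'M[R]_#|{: idx r}| :=
  \matrix_(k, l) ((tag (enum_val k) == tag (enum_val l))%:R *
     (if spec b l then 1 else - t * (k == l)%:R)).

Definition Um {R : ringType} {m : nat} {r : 'I_m -> nat} (b : {dffun forall i : 'I_m, 'I_(r i)}) (t : R)
  : 'M[R]_#|{: idx r}| :=
  \matrix_(k, l) ((k == l)%:R +
     t * (spec b k && ~~ spec b l && (tag (enum_val k) == tag (enum_val l)))%:R).

Lemma det_Cm (R : comRingType) m r b (t : R) :
  \det (@Cm R m r b t) = \prod_k (if spec b k then 1 else -t).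
Proof.
rewrite (@det_pat _ _ _ (spec b)).
  by apply: eq_bigr => k _; rewrite mxE eqxx mul1r eqxx mulr1.
move=> k l Hkl; rewrite mxE.
case Hl: (spec b l); last by rewrite (negbTE Hkl) mulr0 mulr0.
rewrite orbF => Hk.
case: eqP => Ht; last by rewrite mul0r.
by move: Hkl; rewrite (spec_uniq Hk Ht) -(spec_uniq Hl erefl) eqxx.
Qed.

Lemma det_Um (R : comRingType) m r b (t : R) :
  \det (@Um R m r b t) = 1.
Proof.
rewrite (@det_pat _ _ _ (fun k => ~~ spec b k)).
  by rewrite big1 // => k _; rewrite mxE eqxx; case: (spec b k); rewrite /= mulr0 addr0.
move=> k l Hkl; rewrite mxE negbK (negbTE Hkl) add0r.
by case: (spec b k); case: (spec b l); rewrite //= mulr0.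
Qed.

Definition dYt {R : realType} {m : nat} {r : 'I_m -> nat} (dX : 'I_m -> 'I_m -> R) (t : R)
  (p q : idx r) : R :=
  if tag p == tag q then (if p == q then 0 else t) else dX (tag p) (tag q).

Lemma Mbeta_eq (R : realType) m r (dX : 'I_m -> 'I_m -> R) (t : R) b :
  (forall i, dX i i = 0) ->
  Mbeta dX (@dYt R m r dX t) b = Cm b t *m Um b t.
Proof.
move=> dX0; apply/matrixP => k l; rewrite /Cm /Um !mxE /=.
under eq_bigr do rewrite !mxE mulrDr.
rewrite big_split /= (bigD1 l) //= eqxx mulr1 [X in _ + X + _]big1; last first.
  by move=> s /negbTE ->; rewrite mulr0.
rewrite addr0 -/(spec b l).
case Hl: (spec b l).
  rewrite big1 ?addr0 ?mulr1 // => s _.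
  by rewrite andbF mulr0 mulr0.
rewrite (bigD1 (sp0 b (tag (enum_val l)))) //= big1; last first.
  move=> s Hs; case Hc: (spec b s && ~~ false && (tag (enum_val s) == tag (enum_val l))).
    by move: Hc Hs => /andP [/andP [Hs1 _] /eqP Ht]; rewrite (spec_uniq Hs1 Ht) eqxx.
  by rewrite mulr0 mulr0.
have [S1 S2] := sp0_spec b (tag (enum_val l)).
rewrite S2 eqxx S1 /= mulr1 addr0 /dYt.
case: eqP => Ht.
  rewrite Ht ?eqxx dX0 oppr0 expR0 mul1r addr0 !mul1r mulr1 (inj_eq enum_val_inj).
  by case: eqP => _; rewrite ?mulr1 ?mulr0 ?oppr0 ?add0r // addNr.
by rewrite subrr mulr0 !mul0r addr0.
Qed.

Lemma exists_t (R : realType) m (dX : 'I_m -> 'I_m -> R) :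
  is_metric dX -> exists t : R, 0 < t /\ forall i j, i != j -> t <= dX i j.
Proof.
move=> [H0 [Hs Ht]].
have Hpos : forall i j, i != j -> 0 < dX i j.
  move=> i j Hij; have := Ht i j i; rewrite (proj2 (H0 i i) erefl) (Hs j i) => Hle.
  rewrite lt_def; apply/andP; split; last by rewrite -(pmulr_rge0 _ (ltr0n _ 2)) mulr2n mulrDl !mul1r.
  by apply/eqP => /H0 E; rewrite E eqxx in Hij.
exists (\big[Num.min/1]_(p : 'I_m * 'I_m | p.1 != p.2) dX p.1 p.2); split.
  elim/big_ind: _ => //; first by move=> x y Hx Hy; rewrite lt_min Hx Hy.
  by move=> p /Hpos.
move=> i j Hij; rewrite (bigD1 (i, j)) //=.
by rewrite ge_min lexx.
Qed.

Lemma dYt_metric (R : realType) m r (dX : 'I_m -> 'I_m -> R) (t : R) :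
  is_metric dX -> 0 < t -> (forall i j, i != j -> t <= dX i j) ->
  is_metric (@dYt R m r dX t).
Proof.
move=> [H0 [Hs Ht]] tpos tle.
have dX0 : forall i, dX i i = 0 by move=> i; apply/H0.
have dXge0 : forall i j, 0 <= dX i j.
  move=> i j; have := Ht i j i; rewrite dX0 (Hs j i) => Hle.
  by rewrite -(pmulr_rge0 _ (ltr0n _ 2)) mulr2n mulrDl !mul1r.
have Yge0 : forall p q, 0 <= @dYt R m r dX t p q.
  by move=> p q; rewrite /dYt; case: ifP => _; [case: ifP => _ // ; exact: ltW|].
have Yge : forall p q, dX (tag p) (tag q) <= @dYt R m r dX t p q.
  move=> p q; case: (boolP (tag p == tag q)) => E; last by rewrite /dYt (negbTE E).
  by rewrite (eqP E) dX0; exact: Yge0.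
split; [|split].
- move=> p q; rewrite /dYt; split.
    case: eqP => E; first by case: eqP => // _ /eqP; rewrite gt_eqF.
    by move/H0.
  by move=> ->; rewrite !eqxx.
- by move=> p q; rewrite /dYt eq_sym [q == p]eq_sym Hs.
- move=> p q s.
  case: (boolP (tag p == tag s)) => Eps; last first.
    rewrite {1}/dYt (negbTE Eps).
    apply: le_trans (Ht _ (tag q) _) _; apply: lerD; exact: Yge.
  rewrite {1}/dYt Eps; case: eqP => Eq; first by apply: addr_ge0.
  case: (boolP (tag p == tag q)) => Epq; last first.
    rewrite {1}/dYt (negbTE Epq) -[X in X <= _]addr0; apply: lerD => //; exact: tle.
  have Eqs : tag q == tag s by rewrite -(eqP Epq).
  case: (eqVneq p q) => Epq'.
    subst q; rewrite [X in _ <= _ + X]/dYt Eqs; case: eqP => // _.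
    by rewrite -[X in X <= _]add0r; apply: lerD.
  rewrite {1}/dYt Epq (negbTE Epq') -[X in X <= _]addr0; apply: lerD => //.
Qed.

Theorem proposition4p7 (R : realType) (m : nat) (dX : 'I_m -> 'I_m -> R)
  (r : 'I_m -> nat) :
  is_metric dX ->
  (forall i, (0 < r i)%N) ->
  exists dY : idx r -> idx r -> R,
    is_metric dY /\ F_Xr dX dY != 0.
Proof.
move=> HX Hr.
have [t [tpos tle]] := exists_t _ _ _ HX.
exists (@dYt R m r dX t); split; first exact: dYt_metric.
have dX0 : forall i, dX i i = 0 by move=> i; apply/(proj1 HX).
rewrite /F_Xr (eq_bigr (fun _ => \prod_i (-t) ^+ (r i).-1)); last first.
  by move=> b _; rewrite Mbeta_eq // det_mulmx det_Um mulr1 det_Cm prod_val.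
rewrite sumr_const mulrn_eq0 negb_or; apply/andP; split.
  rewrite -lt0n; apply/card_gt0P.
  by exists (finfun (fun i => Ordinal (Hr i)) : {dffun forall i : 'I_m, 'I_(r i)}).
rewrite prodf_seq_neq0; apply/allP => i _ /=.
by rewrite expf_neq0 // oppr_eq0 gt_eqF.
Qed.
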